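(* Let $G=(V,E,\partial)$ be a graph and let $\mathcal G=\bigoplus_{v\in V}\mathcal G_v$ be a vertex space associated to $G$. Then there exist a graph $\tilde G=(\tilde V,E,\tilde\partial)$ (with the same edge set $E$) and a surjective graph morphism $\pi\colon \tilde G\to G$ which is the identity on $E$, together with subspaces $\tilde{\mathcal G}_{\tilde v}\subseteq \mathbb C^{\tilde E_{\tilde v}}$ for $\tilde v\in\tilde V$ (where $\tilde E_{\tilde v}$ is the set of edges adjacent to $\tilde v$ in $\tilde G$; such edges are adjacent to $\pi(\tilde v)$ in $G$, and $\tilde{\mathcal G}_{\tilde v}$ is regarded as a subspace of $\mathbb C^{E_{\pi(\tilde v)}}$ by extension by zero), such that $$\mathcal G=\bigoplus_{\tilde v\in\tilde V}\tilde{\mathcal G}_{\tilde v}\qquad\text{and}\qquad \mathcal G_v=\bigoplus_{\tilde v\in\pi^{-1}\{v\}}\tilde{\mathcal G}_{\tilde v}\quad\text{for all }v\in V,$$ and each $\tilde{\mathcal G}_{\tilde v}$ is irreducible.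
   Context: A graph $G=(V,E,\partial)$ consists of a countable vertex set $V$, a countable edge set $E$, and a map $\partial\colon E\to V\times V$, $e\mapsto(\partial_-e,\partial_+e)$ (initial and terminal vertex). For $v\in V$ let $E_v^\pm=\{e\in E:\partial_\pm e=v\}$ and $E_v=E_v^+\sqcup E_v^-$ (disjoint union, so a self-loop appears twice); $\deg v=|E_v|$ is assumed finite and $\ge1$. The maximal vertex space at $v$ is $\mathbb C^{E_v}$; a vertex space at $v$ is a linear subspace $\mathcal G_v\subseteq\mathbb C^{E_v}$, and a vertex space of $G$ is $\mathcal G=\bigoplus_{v\in V}\mathcal G_v$. For $E_0\subseteq E_v$ set $\mathcal G_v|_{E_0}=\{F\in\mathcal G_v: F_e=0\text{ for all }e\in E_v\setminus E_0\}$. A vertex space $\mathcal G_v$ is irreducible if for every decomposition $E_v=E_{1}\sqcup E_{2}$ with $\mathcal G_v=\mathcal G_v|_{E_1}\oplus\mathcal G_v|_{E_2}$ one has $E_1=\emptyset$ or $E_2=\emptyset$ (the same definition applies to vertices of $\tilde G$). A graph morphism $\pi\colon\tilde G\to G$ which is the identity on edges is a map $\pi\colon\tilde V\to V$ with $\partial_\pm e=\pi(\tilde\partial_\pm e)$ for all $e\in E$; it is surjective if $\pi$ is onto $V$. *)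

(* Defs.v *)
From mathcomp Require Import all_boot all_algebra.
From mathcomp Require Import reals.
From mathcomp.real_closed Require Import complex.

Set Implicit Arguments.
Unset Strict Implicit.
Unset Printing Implicit Defensive.

Import GRing.Theory.
Local Open Scope ring_scope.

(* A graph is given by a vertex type [V] and an edge type [E] (both countable)
   and a boundary map [bd : E -> V * V], bd e = (initial, terminal).
   The disjoint union E_v = E_v^+ ⊔ E_v^- is encoded with "half-edges"
   [(e, b) : E * bool]; [b = true] means the terminal end (e ∈ E_v^+),
   [b = false] the initial end (e ∈ E_v^-).  A self-loop thus contributes
   two half-edges at its vertex.
   An element of C^{E_v} is encoded as a function [E * bool -> C] vanishing
   outside E_v (extension by zero); a vertex space at v is a C-linear
   subspace of such functions. *)

Section Graphs.
Variables (V E : Type) (bd : E -> V * V).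

Definition hend (h : E * bool) : V :=
  if h.2 then (bd h.1).2 else (bd h.1).1.

Definition Eat (v : V) (h : E * bool) : Prop := hend h = v.

End Graphs.

Definition finite_pred (T : eqType) (A : T -> Prop) : Prop :=
  exists s : seq T, forall x, A x -> x \in s.

Definition locally_finite_graph (V : Type) (E : eqType) (bd : E -> V * V) : Prop :=
  forall v : V, finite_pred (Eat bd v) /\ exists h, Eat bd v h.

Section Spaces.
Variables (H : Type) (C : fieldType).

Definition fspace := (H -> C) -> Prop.

Definition subspace_on (A : H -> Prop) (S : fspace) : Prop :=
  [/\ S (fun _ => 0),
      (forall F G, S F -> S G -> S (fun h => F h + G h)),
      (forall (c : C) F, S F -> S (fun h => c * F h)) &
      (forall F, S F -> forall h, ~ A h -> F h = 0)].

Definition restr (A : H -> Prop) (S : fspace) (E0 : H -> Prop) : fspace :=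
  fun F => S F /\ forall h, A h -> ~ E0 h -> F h = 0.

Definition irreducible (A : H -> Prop) (S : fspace) : Prop :=
  forall E1 E2 : H -> Prop,
    (forall h, A h <-> E1 h \/ E2 h) ->
    (forall h, ~ (E1 h /\ E2 h)) ->
    (* S = S|_{E1} ⊕ S|_{E2} *)
    ((forall F, S F <-> exists F1 F2,
         [/\ restr A S E1 F1, restr A S E2 F2 & F = (fun h => F1 h + F2 h)]) /\
     (forall F1 F2, restr A S E1 F1 -> restr A S E2 F2 ->
         (fun h => F1 h + F2 h) = (fun _ => 0) ->
         F1 = (fun _ => 0) /\ F2 = (fun _ => 0))) ->
    (forall h, ~ E1 h) \/ (forall h, ~ E2 h).

(* the (algebraic) sum of the spaces S i, i ranging over indices satisfying P:
   all finite sums of elements F_i ∈ S_i with distinct indices i *)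
Definition sum_space (I : eqType) (P : I -> Prop) (S : I -> fspace) : fspace :=
  fun F => exists (s : seq I) (f : I -> H -> C),
    [/\ uniq s, (forall i, i \in s -> P i /\ S i (f i)) &
        F = (fun h => \sum_(i <- s) f i h)].

Definition independent (I : eqType) (P : I -> Prop) (S : I -> fspace) : Prop :=
  forall (s : seq I) (f : I -> H -> C),
    uniq s -> (forall i, i \in s -> P i /\ S i (f i)) ->
    (fun h => \sum_(i <- s) f i h) = (fun _ => 0) ->
    forall i, i \in s -> f i = (fun _ => 0).

Definition is_direct_sum (I : eqType) (P : I -> Prop) (S : I -> fspace)
  (W : fspace) : Prop :=
  (forall F, W F <-> sum_space P S F) /\ independent P S.

End Spaces.

(* Main.v *)
Require Import Defs.
From mathcomp Require Import all_boot all_algebra.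
From mathcomp Require Import reals.
From mathcomp.real_closed Require Import complex.


From Stdlib Require Import ClassicalEpsilon FunctionalExtensionality PropExtensionality ProofIrrelevance Classical.

Module Helpers.
Set Implicit Arguments.
Unset Strict Implicit.
Unset Printing Implicit Defensive.
Import GRing.Theory.
Local Open Scope ring_scope.

Lemma sum_sub_seq (C : fieldType) (I : eqType) (r s : seq I) (f : I -> C) :
  uniq r -> uniq s -> {subset s <= r} ->
  \sum_(i <- r) (if i \in s then f i else 0) = \sum_(i <- s) f i.
Proof.
move=> ur us ssr; rewrite -big_mkcond -big_filter; apply: perm_big.
apply: uniq_perm; [exact: filter_uniq | exact: us|].
move=> x; rewrite mem_filter; case xs: (x \in s) => //=; exact: ssr.
Qed.

Lemma sum_space_add (H : Type) (C : fieldType) (I : eqType) (P : I -> Prop)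
  (S : I -> fspace H C) :
  (forall i, P i -> S i (fun _ => 0)) ->
  (forall i F G, P i -> S i F -> S i G -> S i (fun h => F h + G h)) ->
  forall F G, sum_space P S F -> sum_space P S G -> sum_space P S (fun h => F h + G h).
Proof.
move=> S0 SD F G [s [f [us Hs ->]]] [t [g [ut Ht ->]]].
exists (undup (s ++ t)).
exists (fun i h => (if i \in s then f i h else 0) + (if i \in t then g i h else 0)).
split; first exact: undup_uniq.
- move=> i; rewrite mem_undup mem_cat => /orP Hi.
  have Pi : P i by case: Hi => [/Hs|/Ht] [].
  split=> //.
  case is_: (i \in s); case it: (i \in t).
  + by apply: SD => //; [case: (Hs _ is_)|case: (Ht _ it)].
  + by apply: (SD _ _ (fun _ => 0)) => //; [case: (Hs _ is_)|apply: S0].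
  + by apply: (SD _ (fun _ => 0)) => //; [apply: S0|case: (Ht _ it)].
  + by apply: (SD _ (fun _ => 0) (fun _ => 0)) => //; apply: S0.
- apply: functional_extensionality => h; rewrite big_split /=.
  rewrite (@sum_sub_seq _ _ _ _ (fun i => f i h)) ?undup_uniq //; last first.
    by move=> x xs; rewrite mem_undup mem_cat xs.
  rewrite (@sum_sub_seq _ _ _ _ (fun i => g i h)) ?undup_uniq //.
  by move=> x xs; rewrite mem_undup mem_cat xs orbT.
Qed.

Lemma sum_space0 (H : Type) (C : fieldType) (I : eqType) (P : I -> Prop)
  (S : I -> fspace H C) : sum_space P S (fun _ => 0).
Proof.
exists [::], (fun _ _ => 0); split => //.
by apply: functional_extensionality => h; rewrite big_nil.
Qed.

Lemma sum_space1 (H : Type) (C : fieldType) (I : eqType) (P : I -> Prop)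
  (S : I -> fspace H C) i F : P i -> S i F -> sum_space P S F.
Proof.
move=> Pi SF; exists [:: i], (fun _ => F); split => //.
  by move=> j; rewrite inE => /eqP ->.
by apply: functional_extensionality => h; rewrite big_seq1.
Qed.

Lemma sum_space_in (H : Type) (C : fieldType) (I : eqType) (P : I -> Prop)
  (S : I -> fspace H C) (W : fspace H C) :
  W (fun _ => 0) -> (forall F G, W F -> W G -> W (fun h => F h + G h)) ->
  (forall i F, P i -> S i F -> W F) ->
  forall F, sum_space P S F -> W F.
Proof.
move=> W0 WD WS F [s [f [_ Hs ->]]].
elim: s Hs => [|i s IH] Hs.
  by have -> : (fun h => \sum_(i <- [::]) f i h) = (fun _ => 0)
    by apply: functional_extensionality => h; rewrite big_nil.
have -> : (fun h => \sum_(j <- i :: s) f j h) =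
          (fun h => f i h + (fun h => \sum_(j <- s) f j h) h)
  by apply: functional_extensionality => h; rewrite big_cons.
apply: WD; first by case: (Hs i (mem_head _ _)) => Pi Si; exact: WS Si.
by apply: IH => j js; apply: Hs; rewrite inE js orbT.
Qed.

Lemma indep_disjoint (H : Type) (C : fieldType) (I : eqType) (P : I -> Prop)
  (S : I -> fspace H C) (A : I -> H -> Prop) :
  (forall i F, P i -> S i F -> forall h, ~ A i h -> F h = 0) ->
  (forall i j h, P i -> P j -> A i h -> A j h -> i = j) ->
  independent P S.
Proof.
move=> supp disj s f us Hs Hsum i is_.
apply: functional_extensionality => h.
have [Pi Si] := Hs i is_.
case: (classic (A i h)) => Aih; last exact: supp Si h Aih.
have := f_equal (fun F => F h) Hsum => /=.
rewrite (bigD1_seq i) //= big_seq_cond big1 ?addr0 //.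
move=> j /andP [js ji]; have [Pj Sj] := Hs j js.
apply: (supp j _ Pj Sj) => Ajh; by move: ji; rewrite (disj i j h Pi Pj Aih Ajh) eqxx.
Qed.

Lemma sum_space_assoc (H : Type) (C : fieldType) (I J : eqType)
  (S : I -> fspace H C) (T : J -> fspace H C) (pi : J -> I) :
  (forall i, S i (fun _ => 0)) ->
  (forall i F G, S i F -> S i G -> S i (fun h => F h + G h)) ->
  (forall j, T j (fun _ => 0)) ->
  (forall j F G, T j F -> T j G -> T j (fun h => F h + G h)) ->
  (forall i F, S i F <-> sum_space (fun j => pi j = i) T F) ->
  forall F, sum_space (fun _ => True) S F <-> sum_space (fun _ => True) T F.
Proof.
move=> S0 SD T0 TD HST F; split.
- apply: sum_space_in; first exact: sum_space0.
  + apply: sum_space_add; first by move=> *; apply: T0.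
    by move=> j F1 F2 _; apply: TD.
  + move=> i G _ /HST [s [f [us Hs ->]]]; exists s, f; split => //.
    by move=> j /Hs [_ ?].
- apply: sum_space_in; first exact: sum_space0.
  + apply: sum_space_add; first by move=> *; apply: S0.
    by move=> j F1 F2 _; apply: SD.
  + move=> j G _ TG; apply: (sum_space1 (i := pi j)) => //.
    by apply/HST; apply: (sum_space1 (i := j)).
Qed.

Definition pb (P : Prop) : bool := if excluded_middle_informative P then true else false.
Lemma pbP (P : Prop) : pb P = true <-> P.
Proof. by rewrite /pb; case: excluded_middle_informative. Qed.

Section Main.
Variables (R : realType) (V E : countType) (bd : E -> V * V).
Hypothesis HG : locally_finite_graph bd.
Variable Gv : V -> fspace (E * bool) R[i].
Hypothesis HGv : forall v, subspace_on (Eat bd v) (Gv v).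

Let H := (E * bool)%type.
Let hd := hend bd.

Definition dec (v : V) (D : pred H) :=
  forall F, Gv v F -> Gv v (fun h => if D h then F h else 0).

Definition Rel (x y : H) :=
  hd x = hd y /\ forall D, dec (hd x) D -> D x = D y.

Lemma Rel_refl x : Rel x x.
Proof. by split. Qed.
Lemma Rel_sym x y : Rel x y -> Rel y x.
Proof. by move=> [e Hd]; split => // D; rewrite -e => /Hd ->. Qed.
Lemma Rel_trans x y z : Rel x y -> Rel y z -> Rel x z.
Proof.
move=> [e1 H1] [e2 H2]; split; first by rewrite e1.
by move=> D dD; rewrite (H1 _ dD) H2 // -e1.
Qed.

Definition rep (x : H) : H := epsilon (inhabits x) (Rel x).

Lemma Rel_rep x : Rel x (rep x).
Proof. by apply: epsilon_spec; exists x; apply: Rel_refl. Qed.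

Lemma rep_eq x y : Rel x y -> rep x = rep y.
Proof.
move=> Rxy; rewrite /rep.
have -> : Rel x = Rel y.
  apply: functional_extensionality => z; apply: propositional_extensionality.
  split; [apply: Rel_trans; exact: Rel_sym | exact: Rel_trans].
by congr epsilon; apply: proof_irrelevance.
Qed.

Lemma rep_Rel x y : rep x = rep y -> Rel x y.
Proof.
move=> e; apply: (Rel_trans (Rel_rep x)); rewrite e; apply: Rel_sym; exact: Rel_rep.
Qed.

Lemma hd_rep x : hd (rep x) = hd x.
Proof. by case: (Rel_rep x) => ->. Qed.

Lemma rep_idem x : rep (rep x) == rep x.
Proof. by apply/eqP; symmetry; apply: rep_eq; exact: Rel_rep. Qed.

Definition Vt : countType := {x : H | rep x == x}.
Definition cls (h : H) : Vt := exist _ (rep h) (rep_idem h).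
Definition pi (t : Vt) : V := hd (val t).
Definition bdt (e : E) : Vt * Vt := (cls (e, false), cls (e, true)).
Definition Gt (t : Vt) : fspace H R[i] :=
  fun F => Gv (pi t) F /\ forall h, rep h != val t -> F h = 0.

Lemma hend_bdt h : hend bdt h = cls h.
Proof. by case: h => e [] . Qed.

Lemma cls_eq h t : (cls h = t) <-> (rep h = val t).
Proof.
split; first by move<-.
by move=> e; apply: val_inj.
Qed.

Lemma rep_val (t : Vt) : rep (val t) = val t.
Proof. exact/eqP/(valP t). Qed.

Lemma dec_C v D : dec v D -> dec v (predC D).
Proof.
move=> dD F GF; have [Z Ad Sc _] := HGv v.
have := Ad _ _ GF (Sc (-1) _ (dD F GF)).
congr Gv; apply: functional_extensionality => h /=.
by case: (D h) => /=; rewrite ?mulr0 ?addr0 // mulN1r subrr.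
Qed.

Lemma dec_I v D1 D2 : dec v D1 -> dec v D2 -> dec v (predI D1 D2).
Proof.
move=> d1 d2 F GF; have := d2 _ (d1 F GF).
congr Gv; apply: functional_extensionality => h /=.
by case: (D1 h); case: (D2 h).
Qed.

Lemma dec_T v : dec v predT.
Proof. by move=> F GF. Qed.

Lemma block_dec x : dec (hd x) (fun h => rep h == rep x).
Proof.
set v := hd x.
have [[s Hs] _] := HG v.
suff [D [dD Dx HD]] : exists D, [/\ dec v D, D x &
    forall h, h \in s -> hd h = v -> D h -> Rel x h].
  move=> F GF; have := dD F GF; congr Gv.
  apply: functional_extensionality => h.
  have [Z Ad Sc Sp] := HGv v.
  case: (hd h =P v) => hv; last first.
    by rewrite (Sp F GF h hv); case: (_ == _); case: (D h).
  have hs : h \in s by apply: Hs.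
  case Dh: (D h).
    by rewrite (rep_eq (HD h hs hv Dh)) eqxx.
  case: eqP => // /esym /rep_Rel [_ Hx].
  by rewrite -(Hx D dD) Dx in Dh.
elim: s {Hs} => [|h s [D [dD Dx HD]]].
  by exists predT; split => //; exact: dec_T.
case: (classic (hd h = v /\ ~ Rel x h)) => [[hv nR]|ok]; last first.
  exists D; split => // h'; rewrite inE => /orP [/eqP ->|h's] hv Dh; last exact: HD.
  by apply: NNPP => nR; apply: ok.
have [D' ndD'] : exists D', ~ (dec (hd x) D' -> D' x = D' h).
  apply: not_all_ex_not => Hall; apply: nR; split => //; by rewrite hv.
have [dD' nD'] := imply_to_and _ _ ndD'.
pose D'' := if D' x then D' else predC D'.
have dD'' : dec v D'' by rewrite /D''; case: (D' x) => //; exact: dec_C.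
have D''x : D'' x by rewrite /D''; case Dx': (D' x) => //=; rewrite Dx'.
have D''h : D'' h = false.
  rewrite /D''; case Dx': (D' x) => /=; case Dh': (D' h) => //; by rewrite Dx' Dh' in nD'.
exists (predI D D''); split; [exact: dec_I | by rewrite /= Dx D''x|].
move=> h'; rewrite inE => /orP [/eqP ->|h's] hv' /= /andP [Dh' D''h'].
  by rewrite D''h in D''h'.
exact: HD.
Qed.

Lemma block_dec_t (t : Vt) F : Gv (pi t) F ->
  Gv (pi t) (fun h => if rep h == val t then F h else 0).
Proof. by move=> GF; have := block_dec GF; rewrite rep_val. Qed.

Lemma Gt_sub t : subspace_on (Eat bdt t) (Gt t).
Proof.
have [Z Ad Sc Sp] := HGv (pi t).
split.
- by split.
- move=> F G [GF HF] [GG HG']; split; first exact: Ad.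
  by move=> h nh; rewrite HF // HG' // addr0.
- move=> c F [GF HF]; split; first exact: Sc.
  by move=> h nh; rewrite HF // mulr0.
- move=> F [GF HF] h nE; apply: HF; apply/eqP => e; apply: nE.
  by rewrite /Eat hend_bdt; apply/cls_eq.
Qed.

Lemma Gt_Gv t F : Gt t F -> Gv (pi t) F.
Proof. by case. Qed.

Lemma Gv_decomp v F : Gv v F -> sum_space (fun t => pi t = v) Gt F.
Proof.
move=> GF; have [[s Hs] _] := HG v.
have [Z Ad Sc Sp] := HGv v.
pose ts := undup [seq cls h | h <- s & hd h == v].
exists ts, (fun t h => if rep h == val t then F h else 0); split.
- exact: undup_uniq.
- move=> t; rewrite mem_undup => /mapP [h]; rewrite mem_filter => /andP [/eqP hv _] ->.
  have pv : pi (cls h) = v by rewrite /pi /= hd_rep.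
  split => //; split.
    by apply: block_dec_t; rewrite pv.
  by move=> h' /negbTE ->.
- apply: functional_extensionality => h.
  case: (hd h =P v) => hv; last first.
    rewrite (Sp F GF h hv) big1_seq // => t /andP [_].
    rewrite mem_undup => /mapP [h0]; rewrite mem_filter => /andP [/eqP h0v _] ->.
    case: ifP => // /eqP e; exfalso; apply: hv.
  have hs : h \in s by apply: Hs.
  have cin : cls h \in ts by rewrite mem_undup; apply: map_f; rewrite mem_filter hv eqxx.
  rewrite (bigD1_seq (cls h)) ?undup_uniq //= eqxx big_seq_cond big1 ?addr0 //.
  move=> t /andP [_ tn]; case: eqP => // e.
  by move: tn; rewrite (proj2 (cls_eq h t) e) eqxx.
Qed.

Lemma Gv_sum v F : Gv v F <-> sum_space (fun t => pi t = v) Gt F.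
Proof.
split; first exact: Gv_decomp.
have [Z Ad Sc Sp] := HGv v.
apply: sum_space_in => // t G <-; exact: Gt_Gv.
Qed.

Lemma Gt_indep (P : Vt -> Prop) : independent P Gt.
Proof.
apply: (@indep_disjoint _ _ _ P Gt (fun t h => Eat bdt t h)).
  move=> t F _ GF h; have [_ _ _ Sp] := Gt_sub t; exact: Sp.
by move=> t t' h _ _; rewrite /Eat => -> ->.
Qed.

Lemma Gt_irr t : irreducible (Eat bdt t) (Gt t).
Proof.
move=> E1 E2 HA Hdisj [Hdec _].
case: (classic (exists h, E1 h)) => [[h1 E1h1]|n1]; last first.
  by left => h Eh; apply: n1; exists h.
case: (classic (exists h, E2 h)) => [[h2 E2h2]|n2]; last first.
  by right => h Eh; apply: n2; exists h.
exfalso.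
set x := val t.
have r1 : rep h1 = x by apply/cls_eq; rewrite -hend_bdt; apply/HA; left.
have r2 : rep h2 = x by apply/cls_eq; rewrite -hend_bdt; apply/HA; right.
have [_ HR] : Rel h1 h2 by apply: rep_Rel; rewrite r1 r2.
pose D := fun h => pb (E1 h) || (rep h != x).
have hv : hd h1 = pi t by rewrite /pi -/x -r1 hd_rep.
suff dD : dec (pi t) D.
  have := HR D; rewrite hv => /(_ dD).
  rewrite /D r1 r2 eqxx /= orbF.
  have -> : pb (E1 h1) = true by apply/pbP.
  rewrite orbF; case E12: (pb (E1 h2)) => // _.
  by move/pbP: E12 => E12; apply: (Hdisj h2).
move=> F GF.
have [Z Ad Sc Sp] := HGv (pi t).
have GFb : Gt t (fun h => if rep h == x then F h else 0).
  split; first exact: block_dec_t.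
  by move=> h /negbTE ->.
have GFc : Gv (pi t) (fun h => if ~~ (rep h == x) then F h else 0).
  have := dec_C (@block_dec (val t)) GF; rewrite rep_val.
  by congr Gv.
have [F1 [F2 [[G1 R1] [G2 R2] EF]]] := (proj1 (Hdec _) GFb).
have := Ad _ _ GFc (Gt_Gv G1); congr Gv.
apply: functional_extensionality => h.
have [_ _ _ Sp1] := Gt_sub t.
rewrite /D; case: eqP => [rh|rh] /=.
- have Eh : Eat bdt t h by rewrite /Eat hend_bdt; apply/cls_eq.
  rewrite add0r orbF.
  case E1h: (pb (E1 h)).
  + move/pbP: E1h => E1h.
    have := f_equal (fun G => G h) EF; rewrite /= rh eqxx => ->.
    by rewrite (R2 h Eh) ?addr0 // => E2h; apply: (Hdisj h).
  + by rewrite R1 // => /pbP; rewrite E1h.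
- rewrite orbT (Sp1 F1 G1 h) ?addr0 // /Eat hend_bdt => /cls_eq; exact: rh.
Qed.

End Main.

End Helpers.
Import Helpers.

Local Open Scope ring_scope.

Theorem lemma2p5 (R : realType) (V E : countType) (bd : E -> V * V)
  (HG : locally_finite_graph bd)
  (Gv : V -> fspace (E * bool) R[i])
  (HGv : forall v, subspace_on (Eat bd v) (Gv v)) :
  exists (Vt : countType) (bdt : E -> Vt * Vt) (pi : Vt -> V)
         (Gt : Vt -> fspace (E * bool) R[i]),
    locally_finite_graph bdt /\
        (* pi is a graph morphism, identity on edges *)
        (forall e, (bd e).1 = pi (bdt e).1 /\ (bd e).2 = pi (bdt e).2) /\
        (* pi is surjective *)
        (forall v, exists vt, pi vt = v) /\
        (forall vt, subspace_on (Eat bdt vt) (Gt vt)) /\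
        (* G = ⊕_{vt} Gt vt, where G = ⊕_v G_v *)
        is_direct_sum (fun _ => True) Gt (sum_space (fun _ => True) Gv) /\
        (forall v, is_direct_sum (fun vt => pi vt = v) Gt (Gv v)) /\
        (forall vt, irreducible (Eat bdt vt) (Gt vt)).
Proof.
exists (@Vt R V E bd Gv), (@bdt R V E bd Gv), (@pi R V E bd Gv), (@Gt R V E bd Gv); split; [|split; [|split; [|split; [|split; [|split]]]]].
- move=> t; split.
    have [[s Hs] _] := HG (pi t); exists s => h.
    rewrite /Eat hend_bdt => /cls_eq e; apply: Hs.
    by rewrite /Eat /pi -e hd_rep.
  exists (val t); rewrite /Eat hend_bdt; apply/cls_eq; exact: rep_val.
- by move=> e; rewrite /pi /= !hd_rep.
- move=> v; have [_ [h Eh]] := HG v; exists (@cls R V E bd Gv h).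
  by rewrite /pi /= hd_rep.
- exact: Gt_sub.
- split; last exact: Gt_indep.
  move=> F; apply: (sum_space_assoc (S:=Gv) (T:=@Gt R V E bd Gv) (pi:=@pi R V E bd Gv)).
  + by move=> v; case: (HGv v).
  + by move=> v; case: (HGv v).
  + by move=> t; case: (Gt_sub HGv t).
  + by move=> t; case: (Gt_sub HGv t).
  + move=> v G; exact: Gv_sum.
- move=> v; split; last exact: Gt_indep.
  move=> F; exact: Gv_sum.
- exact: Gt_irr.
Qed.
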